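(* Assume that $M\in\omega$ and $\mu:\mathcal P(2^{\omega})\to\omega\cup\{\infty\}$ is a monotone, subadditive function such that (i) $\mu(U)=\infty$ for each non-empty clopen $U\subseteq 2^{\omega}$; (ii) for each $a,b\subseteq 2^{\omega}$, if $\mu(a)\le M<\mu(b)$, then $\sup\{\mu(b\setminus U)+M: a\subseteq U,\ U \text{ clopen in } 2^{\omega}\}\ge \mu(b)$. Then $\mathbb H(\mu)$ is dense, shrinkable and $\mathbb G(\mu,M)$-large.
   Context: For $n\in\omega$ let $C_n=\{n\}\times 2^{\omega}$ and $C=\bigcup_{n<\omega}C_n$ (with the Euclidean topology). For $\mu:\mathcal P(2^\omega)\to\omega\cup\{\infty\}$ and $n\in\omega$ define $\mu^{(n)}:\mathcal P(C_n)\to\omega\cup\{\infty\}$ by $\mu^{(n)}(A)=\mu(\{x:\langle n,x\rangle\in A\})$. Let $\mathbb E$ be the set of functions $e$ with $\mathrm{dom}(e)$ an infinite subset of $\omega$ and $\emptyset\ne e(n)\subseteq C_n$ for each $n\in\mathrm{dom}(e)$; let $\mathbb O=\{o\in\mathbb E: o(n)$ is clopen in $C_n$ for each $n\in\mathrm{dom}(o)\}$. For $f,g\in\mathbb E$: $f\sqsubset g$ iff $\mathrm{dom}(f)\subseteq\mathrm{dom}(g)$ and $f(n)\subseteq g(n)$ for all $n\in\mathrm{dom}(f)$; $f\sqsubset^* g$ iff $\mathrm{dom}(f)\setminus\mathrm{dom}(g)$ is finite and $\{n\in\mathrm{dom}(f): f(n)\not\subseteq g(n)\}$ is finite; $f\perp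 g$ iff $\{n\in\mathrm{dom}(f)\cap\mathrm{dom}(g): f(n)\cap g(n)\ne\emptyset\}$ is finite. For $h\in\mathbb E$, $o\in\mathbb O$, the function $h\dotminus o$ has domain $\{n\in\mathrm{dom}(h): h(n)\not\subseteq o(n)\}$ (where $n\notin\mathrm{dom}(o)$ counts as $h(n)\not\subseteq o(n)$), with $(h\dotminus o)(n)=h(n)\setminus o(n)$ if $n\in\mathrm{dom}(o)$ and $=h(n)$ otherwise. $\mathbb G(\mu,M)=\{g\in\mathbb E:\mu^{(n)}(g(n))\le M$ for each $n\in\mathrm{dom}(g)\}$ and $\mathbb H(\mu)=\{h\in\mathbb E:\lim_{n\in\mathrm{dom}(h)}\mu^{(n)}(h(n))=\infty\}$. For $\mathbb G,\mathbb H\subseteq\mathbb E$: $\mathbb H$ is dense iff for each $o\in\mathbb O$ there is $h\in\mathbb H$ with $h\sqsubset o$; $\mathbb H$ is shrinkable iff for each $h\in\mathbb H$ and each countably infinite $\mathcal O\subseteq\mathbb O$ there is $h'\in\mathbb H$ with $h'\sqsubset h$ and, for all $o\in\mathcal O$, $h'\sqsubset^* o$ or $h'\perp o$; $\mathbb H$ is $\mathbb G$-large iff for each $g\in\mathbb G$ and each countably infinite $\mathcal H\subseteq\mathbb H$ there is $o\in\mathbb O$ with $g\sqsubset o$ and $h\dotminus o\in\mathbb H$ for every $h\in\mathcal H$. *)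

(* Defs.v *)
From HB Require Import structures.
From mathcomp Require Import all_boot all_order all_algebra.
From mathcomp Require Import all_classical all_reals all_analysis.
Set Implicit Arguments. Unset Strict Implicit. Unset Printing Implicit Defensive.
Local Open Scope classical_set_scope.

Definition T2w := cantor_space.
Definition clopen2w (U : set T2w) : Prop := open U /\ closed U.

Inductive natinf : Type := NFin of nat | NInf.

Definition nle (a b : natinf) : Prop :=
  match a, b with
  | _, NInf => True
  | NInf, NFin _ => False
  | NFin m, NFin n => (m <= n)%N
  end.
Definition nlt (a b : natinf) : Prop := nle a b /\ a <> b.
Definition nadd (a b : natinf) : natinf :=
  match a, b with
  | NFin m, NFin n => NFin (m + n)
  | _, _ => NInf
  end.

(* sup S >= v, where sup is the least upper bound in omega \cup {infinity} *)
Definition sup_ge (S : set natinf) (v : natinf) : Prop :=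
  forall w, (forall s, S s -> nle s w) -> nle v w.

Definition mu_monotone (mu : set T2w -> natinf) : Prop :=
  forall a b, a `<=` b -> nle (mu a) (mu b).
Definition mu_subadditive (mu : set T2w -> natinf) : Prop :=
  forall a b, nle (mu (a `|` b)) (nadd (mu a) (mu b)).

Definition C := (nat * T2w)%type.
Definition Cn (n : nat) : set C := [set p | p.1 = n].
Definition sect (n : nat) (A : set C) : set T2w := [set x | A (n, x)].
Definition mun (mu : set T2w -> natinf) (n : nat) (A : set C) : natinf :=
  mu (sect n A).
(* A clopen2w in C_n (A a subset of C_n), via the homeomorphism x |-> <n,x> *)
Definition clopenCn (n : nat) (A : set C) : Prop := A `<=` Cn n /\ clopen2w (sect n A).

(* A partial function e with nonempty values e(n) \subseteq C_n is encoded as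
   a total function nat -> set C which is empty exactly outside dom(e). *)
Definition fam := nat -> set C.
Definition dom (e : fam) : set nat := [set n | e n !=set0].

Definition in_E (e : fam) : Prop :=
  infinite_set (dom e) /\ forall n, e n `<=` Cn n.
Definition in_O (o : fam) : Prop :=
  in_E o /\ forall n, dom o n -> clopenCn n (o n).

Definition sqsub (f g : fam) : Prop :=
  dom f `<=` dom g /\ forall n, dom f n -> f n `<=` g n.
Definition sqsub_star (f g : fam) : Prop :=
  finite_set (dom f `\` dom g) /\
  finite_set [set n | dom f n /\ dom g n /\ ~ (f n `<=` g n)].
Definition perp (f g : fam) : Prop :=
  finite_set [set n | dom f n /\ dom g n /\ (f n `&` g n) !=set0].

(* h -. o : domain {n in dom h | h(n) not subset of o(n)}, value h(n) \ o(n)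
   (with o(n) = empty when n \notin dom o) *)
Definition dotminus (h o : fam) : fam := fun n => h n `\` o n.

Definition GG (mu : set T2w -> natinf) (M : nat) : set fam :=
  [set g | in_E g /\ forall n, dom g n -> nle (mun mu n (g n)) (NFin M)].
Definition HH (mu : set T2w -> natinf) : set fam :=
  [set h | in_E h /\ forall k : nat, exists N : nat,
      forall n, dom h n -> (N <= n)%N -> nle (NFin k) (mun mu n (h n))].

Definition countably_infinite {U} (A : set U) : Prop :=
  countable A /\ infinite_set A.

Definition dense_fam (H : set fam) : Prop :=
  forall o, in_O o -> exists h, H h /\ sqsub h o.
Definition shrinkable_fam (H : set fam) : Prop :=
  forall h, H h -> forall O : set fam, O `<=` in_O -> countably_infinite O ->
    exists h', H h' /\ sqsub h' h /\ forall o, O o -> sqsub_star h' o \/ perp h' o.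
Definition large_fam (G H : set fam) : Prop :=
  forall g, G g -> forall Hs : set fam, Hs `<=` H -> countably_infinite Hs ->
    exists o, in_O o /\ sqsub g o /\ forall h, Hs h -> H (dotminus h o).

(* Main.v *)
Require Import Defs.
From mathcomp Require Import all_boot all_classical all_reals all_analysis.
From mathcomp Require Import zify finmap.
Local Open Scope classical_set_scope.

Lemma nle_trans a b c : nle a b -> nle b c -> nle a c.
Proof. case: a; case: b; case: c => //= *; lia. Qed.

Lemma nle_refl a : nle a a.
Proof. by case: a => //= n; rewrite leqnn. Qed.

Lemma nle_total a b : nle a b \/ nle b a.
Proof. case: a; case: b => //=; try by [left|right]. move=> m n; lia. Qed.

Lemma nle0 a : nle (NFin 0) a.
Proof. by case: a => //= n; rewrite leqnn. Qed.

Lemma nle_half k x y : nle (NFin (k + k)) (nadd x y) -> nle y x -> nle (NFin k) x.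
Proof. case: x; case: y => //= *; lia. Qed.

Lemma inf_unbounded {S : set nat} : infinite_set S -> forall N, exists n, (N <= n)%N /\ S n.
Proof.
move=> SI N; have := infinite_setD SI (finite_II N).
move/infinite_setN0 => [n [Sn nI]]; exists n; split => //.
by rewrite leqNgt; apply/negP => h; apply: nI.
Qed.

Lemma unbounded_inf (S : set nat) : (forall N, exists n, (N <= n)%N /\ S n) -> infinite_set S.
Proof.
move=> H /finite_fsetP [X SX].
have [n [Bn Sn]] := H (\max_(x <- X) x).+1.
rewrite SX in Sn.
have : (n <= \max_(x <- X) x)%N by apply: (@leq_bigmax_seq _ _ xpredT id n).
lia.
Qed.

Lemma bounded_fin (S : set nat) B : (forall n, S n -> (n < B)%N) -> finite_set S.
Proof. by move=> H; apply: (sub_finite_set _ (finite_II B)) => n /H. Qed.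

Lemma dom_sub (f g : fam) n : f n `<=` g n -> dom f n -> dom g n.
Proof. by move=> fg [p /fg gp]; exists p. Qed.

Lemma sqsub_trans f g h : sqsub f g -> sqsub g h -> sqsub f h.
Proof.
move=> [d1 s1] [d2 s2]; split; first by move=> n /d1 /d2.
by move=> n fn; apply: subset_trans (s1 _ fn) (s2 _ (d1 _ fn)).
Qed.

Lemma countable_cover {O : set fam} : countable O ->
  exists f : nat -> fam, forall o, O o -> exists j, f j = o.
Proof.
move=> /countable_injP [i iinj].
exists (fun j => match pselect (exists o, O o /\ i o = j) with
  | left e => projT1 (cid e) | right _ => fun _ => set0 end).
move=> o Oo; exists (i o); case: pselect => [e|nE]; last by exfalso; apply: nE; exists o.
case: (cid e) => o' [Oo' io'] /=.
by apply: iinj => //; apply: mem_set.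
Qed.

Lemma sect_set0 n (A : set C) : ~ (A !=set0) -> sect n A `<=` set0.
Proof. by move=> nA x Ax; apply: nA; exists (n, x). Qed.

Lemma Cn_pair {n} {A : set C} {p} : A `<=` Cn n -> A p -> p = (n, p.2) /\ sect n A p.2.
Proof. case: p => m x /= sub Ap; have := sub _ Ap; rewrite /Cn /= => ?; subst m; by split. Qed.

Lemma dense_part mu :
  mu_monotone mu ->
  (forall U : set T2w, clopen2w U -> U !=set0 -> mu U = NInf) ->
  dense_fam (HH mu).
Proof.
move=> mono hi o [oE oO]; exists o; split; last by split => [n|n _ p].
split => // k; exists 0 => n dn _.
rewrite /mun (hi _ (oO n dn).2) //.
case: dn => p op; have [_ sp] := Cn_pair (oE.2 n) op; by exists p.2.
Qed.


Definition chin (mu : set T2w -> natinf) (h o : fam) n : Prop :=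
  ((h n `&` o n) !=set0 /\ nle (mu (sect n (h n `\` o n))) (mu (sect n (h n `&` o n))))
  \/ (h n `\` o n = set0).
Definition Sin mu (h o : fam) : set nat := [set n | dom h n /\ chin mu h o n].
Definition step mu (o h : fam) : fam := fun n =>
  if pselect (finite_set (Sin mu h o)) then
    (if pselect (dom h n /\ ~ chin mu h o n) then h n `\` o n else set0)
  else (if pselect (Sin mu h o n) then h n `&` o n else set0).

Lemma ne0 (A : set C) : ~ (A = set0) -> A !=set0.
Proof. by move=> nA; apply/set0P/eqP. Qed.

Lemma step_sub mu o h n : step mu o h n `<=` h n.
Proof.
rewrite /step; case: pselect => ? /=; case: pselect => ? /=.
all: first [by move=> p [] | by move=> p | idtac].
Qed.

Lemma step_dom {mu o h n} : dom (step mu o h) n -> dom h n.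
Proof. exact: dom_sub (step_sub _ _ _ _). Qed.

Lemma step_cases mu o h n :
  (finite_set (Sin mu h o) /\ dom h n /\ ~ chin mu h o n /\ step mu o h n = h n `\` o n) \/
  (~ finite_set (Sin mu h o) /\ Sin mu h o n /\ step mu o h n = h n `&` o n) \/
  step mu o h n = set0.
Proof.
rewrite /step; case: (pselect (finite_set _)) => F /=.
  case: (pselect (dom h n /\ _)) => c /=; [left; tauto | right; right; done].
case: (pselect (Sin mu h o n)) => c /=; [right; left; tauto | right; right; done].
Qed.

Lemma step_piece mu o h n : mu_monotone mu -> dom (step mu o h) n ->
  (step mu o h n = h n `&` o n /\
     nle (mu (sect n (h n `\` o n))) (mu (sect n (h n `&` o n)))) \/
  (step mu o h n = h n `\` o n /\
     nle (mu (sect n (h n `&` o n))) (mu (sect n (h n `\` o n)))).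
Proof.
move=> mono ds.
have [[F [dh [nc ->]]]|[[F [[dh ch] ->]]|e]] := step_cases mu o h n; last first.
- by exfalso; case: ds => p; rewrite e.
- left; split => //; case: ch => [[_ le]|e]; first by [].
  have nine : ~ ((h n `\` o n) !=set0) by rewrite e => -[].
  have h1 := mono _ _ (@sect_set0 n _ nine).
  eapply nle_trans; [exact h1|]; apply: mono; exact: sub0set.
- right; split => //.
  have [le|le] := nle_total (mu (sect n (h n `&` o n))) (mu (sect n (h n `\` o n))).
    by [].
  have [ine|nine] := pselect ((h n `&` o n) !=set0).
    by exfalso; apply: nc; left.
  have h1 := mono _ _ (@sect_set0 n _ nine).
  eapply nle_trans; [exact h1|]; apply: mono; exact: sub0set.
Qed.

Lemma nadd_comm a b : nadd a b = nadd b a.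
Proof. by case: a; case: b => //= m n; rewrite addnC. Qed.

Lemma sect_split mu n (A B : set C) : mu_monotone mu -> mu_subadditive mu ->
  nle (mu (sect n A)) (nadd (mu (sect n (A `&` B))) (mu (sect n (A `\` B)))).
Proof.
move=> mono sub; eapply nle_trans; last exact: sub.
apply: mono => x Ax; rewrite /sect /=.
by case: (pselect (B (n, x))) => Bx; [left|right].
Qed.

Lemma step_HH mu o h : mu_monotone mu -> mu_subadditive mu ->
  HH mu h -> HH mu (step mu o h).
Proof.
move=> mono sub [[hinf hC] hk]; split; [split|].
- case: (pselect (finite_set (Sin mu h o))) => F.
  + apply: (sub_infinite_set _ (infinite_setD hinf F)) => n [dh nS].
    have nc : ~ chin mu h o n by move=> c; apply: nS.
    rewrite /dom /step; case: (pselect (finite_set _)) => ? //=.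
    case: (pselect (dom h n /\ _)) => [?|c] /=; last by exfalso; apply: c.
    by apply: ne0 => e; apply: nc; right.
  + apply: (sub_infinite_set _ F) => n Sn.
    rewrite /dom /step; case: (pselect (finite_set _)) => ? //=.
    case: (pselect (Sin mu h o n)) => ? //=.
    case: Sn => [[p hp]] [[ne _]|e] //.
    exists p; split => //; case: (pselect (o n p)) => // nop.
    by have : (h n `\` o n) p by []; rewrite e.
- by move=> n; apply: subset_trans (step_sub _ _ _ _) (hC n).
- move=> k; have [N hN] := hk (k + k); exists N => n ds Nn.
  have dh := step_dom ds; have := hN n dh Nn.
  have := @sect_split mu n (h n) (o n) mono sub.
  rewrite /mun; case: (step_piece _ _ _ _ mono ds) => [[-> le]|[-> le]] s1 s2.
  + eapply nle_half; [|exact le]; eapply nle_trans; [exact s2|exact s1].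
  + eapply nle_half; [|exact le]; rewrite nadd_comm; eapply nle_trans; [exact s2|exact s1].
Qed.

Lemma step_sqsub mu o h : sqsub (step mu o h) h.
Proof. split; [by move=> n /step_dom | by move=> n _; apply: step_sub]. Qed.

Lemma step_alt mu o h :
  (forall n, dom (step mu o h) n -> step mu o h n `<=` o n) \/
  (forall n, step mu o h n `&` o n = set0).
Proof.
case: (pselect (finite_set (Sin mu h o))) => F; [right|left] => n.
- apply/seteqP; split => p; last by [].
  rewrite /step; case: (pselect (finite_set _)) => ? //=.
  by case: (pselect _) => ? /=; [case=> -[_ ?] ?|case=> -[]].
- move=> _; rewrite /step; case: (pselect (finite_set _)) => ? //=.
  by case: (pselect _) => ? /= p; [case|].
Qed.


Fixpoint hs mu (f : nat -> fam) (h : fam) k : fam :=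
  match k with 0 => h | k'.+1 => step mu (f k') (hs mu f h k') end.

Fixpoint nkf (pk : nat -> nat -> nat) k : nat :=
  match k with 0 => pk 0 0 | k'.+1 => pk k'.+1 (nkf pk k').+1 end.

Lemma nle_finW a b x : (a <= b)%N -> nle (NFin b) x -> nle (NFin a) x.
Proof. by move=> ab; apply: nle_trans. Qed.

Lemma sqsub_refl f : sqsub f f.
Proof. by split => [n|n _ p]. Qed.

Lemma hs_HH mu f h k : mu_monotone mu -> mu_subadditive mu -> HH mu h -> HH mu (hs mu f h k).
Proof. move=> mono sub Hh; elim: k => //= k IH; exact: step_HH. Qed.

Lemma hs_chain mu f h j k : (j <= k)%N -> sqsub (hs mu f h k) (hs mu f h j).
Proof.
elim: k => [|k IH] jk.
  have -> : j = 0 by lia.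
  exact: sqsub_refl.
have [->|jk'] : j = k.+1 \/ (j <= k)%N by lia.
  exact: sqsub_refl.
exact: sqsub_trans (step_sqsub _ _ _) (IH jk').
Qed.

Lemma shrink_part mu : mu_monotone mu -> mu_subadditive mu -> shrinkable_fam (HH mu).
Proof.
move=> mono sub h Hh O _ [cO _].
have [f fO] := countable_cover cO.
pose H k := hs mu f h k.
have HHk : forall k, HH mu (H k) by move=> k; exact: hs_HH.
have ex2 : forall kN : nat * nat, exists n, (kN.2 <= n)%N /\ dom (H kN.1) n /\
    nle (NFin kN.2) (mun mu n (H kN.1 n)).
  move=> [k N] /=; have [[inf _] hk] := HHk k; have [N' hN'] := hk N.
  have [n [le dn]] := inf_unbounded inf (maxn N N').
  exists n; split; first by lia.
  by split => //; apply: hN' => //; lia.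
have [pk' pkP] := choice ex2.
pose pk k N := pk' (k, N).
pose nk := nkf pk.
have nkP : forall k, dom (H k) (nk k) /\ nle (NFin k) (mun mu (nk k) (H k (nk k))) /\
    (k <= nk k)%N.
  elim => [|k [_ [_ IH]]].
    have [_ [d _]] := pkP (0, 0); split => //; split => //; exact: nle0.
  have [le [d m]] := pkP (k.+1, (nk k).+1).
  have e : nk k.+1 = pk' (k.+1, (nk k).+1) by [].
  move: le => /= le; rewrite e.
  split; first exact: d.
  split; last by lia.
  refine (nle_finW _ _ _ _ m); rewrite /=; lia.
have nk_lt : forall k, (nk k < nk k.+1)%N.
  move=> k; have [le _] := pkP (k.+1, (nk k).+1).
  have e : nk k.+1 = pk' (k.+1, (nk k).+1) by [].
  move: le => /= le; rewrite e; lia.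
have nk_mono : forall k K, (k < K)%N -> (nk k < nk K)%N.
  move=> k; elim => [|K IH] kK; first by lia.
  have [->|kK'] : k = K \/ (k < K)%N by lia.
    exact: nk_lt.
  have := IH kK'; have := nk_lt K; lia.
have nk_inj : forall k K, nk k = nk K -> k = K.
  move=> k K e; have [kK|[Kk|//]] : (k < K)%N \/ (K < k)%N \/ k = K. lia.
    by have := nk_mono _ _ kK; lia.
  by have := nk_mono _ _ Kk; lia.
pose h' : fam := fun n => [set p | exists k, nk k = n /\ H k n p].
have h'dom : forall n, dom h' n ->
    exists k, nk k = n /\ h' n = H k n /\ dom (H k) n.
  move=> n [p [k [e Hp]]]; exists k; split => //.
  have eq : h' n = H k n.
    apply/seteqP; split => q; last by move=> Hq; exists k.
    by move=> [k' [e' Hq]]; have <- : k' = k by apply: nk_inj; rewrite e e'.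
  by split => //; exists p.
have chain : forall n k j, (j <= k)%N -> dom (H k) n -> H k n `<=` H j n /\ dom (H j) n.
  move=> n k j jk dk; have [d s] := @hs_chain mu f h j k jk.
  by split; [exact: s | exact: d].
exists h'; split; [split; [split|]|split].
- apply: unbounded_inf => N; exists (nk N); split; first by have [_ [_ ?]] := nkP N.
  have [[p Hp] _] := nkP N; by exists p; exists N.
- by move=> n p [k [<- Hp]]; have [[_ hC] _] := HHk k; apply: hC.
- move=> k0; exists (nk k0) => n dn le.
  have [k [e [-> dk]]] := h'dom n dn.
  have k0k : (k0 <= k)%N.
    rewrite leqNgt; apply/negP => kk0; have := nk_mono _ _ kk0; lia.
  have [_ [m _]] := nkP k; rewrite -e.
  by eapply nle_trans; [|exact m]; rewrite /=.
- split.
  + move=> n dn; have [k [e [eq dk]]] := h'dom n dn.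
    exact: (chain n k 0 (leq0n k) dk).2.
  + move=> n dn; have [k [e [-> dk]]] := h'dom n dn.
    exact: (chain n k 0 (leq0n k) dk).1.
- move=> o Oo; have [j ej] := fO o Oo; subst o.
  have cl : forall n, dom h' n -> (n < (nk j).+1)%N \/
      (h' n `<=` H j.+1 n /\ dom (H j.+1) n).
    move=> n dn; have [k [e [-> dk]]] := h'dom n dn.
    have [kj|jk] : (k <= j)%N \/ (j.+1 <= k)%N. lia.
      left; rewrite -e; have [->|kj'] : k = j \/ (k < j)%N. lia.
        by [].
      by have := nk_mono _ _ kj'; lia.
    by right; apply: chain.
  have [inside|disj] := step_alt mu (f j) (H j); [left|right].
  + split.
    * apply: (@bounded_fin _ (nk j).+1) => n [dn ndo].
      case: (cl n dn) => // -[s d]; exfalso; apply: ndo.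
      apply: (@dom_sub h' (f j) n _ dn); exact: subset_trans s (inside n d).
    * apply: (@bounded_fin _ (nk j).+1) => n [dn [_ ns]].
      case: (cl n dn) => // -[s d]; exfalso; apply: ns.
      exact: subset_trans s (inside n d).
  + apply: (@bounded_fin _ (nk j).+1) => n [dn [_ [p [hp op]]]].
    case: (cl n dn) => // -[s d]; exfalso.
    have : (step mu (f j) (H j) n `&` f j n) p by split => //; apply: s.
    by rewrite disj.
Qed.


Definition hypii (M : nat) (mu : set T2w -> natinf) : Prop :=
  forall a b : set T2w, nle (mu a) (NFin M) -> nlt (NFin M) (mu b) ->
     sup_ge [set s | exists U : set T2w, clopen2w U /\ a `<=` U /\
                       s = nadd (mu (b `\` U)) (NFin M)] (mu b).

Definition Pk (M : nat) (mu : set T2w -> natinf) b U n : Prop :=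
  forall k, (k <= n)%N -> nle (NFin (k + M)) (mu b) -> nle (NFin k) (mu (b `\` U)).

Lemma clopenT2 : clopen2w setT.
Proof. by split; [exact: openT|exact: closedT]. Qed.

Lemma one_b M mu a b K : hypii M mu -> nle (mu a) (NFin M) ->
  nle (NFin (K + M)) (mu b) ->
  exists U, clopen2w U /\ a `<=` U /\ nle (NFin K) (mu (b `\` U)).
Proof.
move=> hii aM; case: K => [|K] bK.
  by exists setT; split; [exact: clopenT2|split => //; exact: nle0].
have nl : nlt (NFin M) (mu b).
  split; first by refine (nle_finW _ _ _ _ bK); lia.
  by move=> e; rewrite -e /= in bK; lia.
have sg := hii a b aM nl.
have : ~ (forall s, [set s | exists U : set T2w, clopen2w U /\ a `<=` U /\
                       s = nadd (mu (b `\` U)) (NFin M)] s -> nle s (NFin (K + M))).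
  move=> all; have := nle_trans _ _ _ bK (sg _ all); rewrite /=; lia.
move/existsNP => [s /not_implyP [[U [cU [aU ->]]] ns]].
exists U; split => //; split => //; move: ns; case: (mu (b `\` U)) => //= x; lia.
Qed.

Lemma Pk_mono M mu b U V n : mu_monotone mu -> V `<=` U -> Pk M mu b U n -> Pk M mu b V n.
Proof.
move=> mono VU P k kn bk; eapply nle_trans; [exact: P k kn bk|].
by apply: mono; apply: setDS.
Qed.

Lemma multi_k M mu a b n : mu_monotone mu -> hypii M mu -> nle (mu a) (NFin M) ->
  exists U, clopen2w U /\ a `<=` U /\ Pk M mu b U n.
Proof.
move=> mono hii aM; elim: n => [|n [U [c [aU P]]]].
  exists setT; split; first exact: clopenT2.
  split => // k k0 _; have -> : k = 0 by lia.
  exact: nle0.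
case: (pselect (nle (NFin (n.+1 + M)) (mu b))) => bn.
  have [V [cV [aV bV]]] := one_b _ _ _ _ _ hii aM bn.
  exists V; split => //; split => // k kn _; exact: nle_finW _ _ _ kn bV.
exists U; split => //; split => // k kn bk.
have [e|kn'] : k = n.+1 \/ (k <= n)%N by lia.
  by subst k; exfalso; apply: bn.
exact: P k kn' bk.
Qed.

Lemma multi_b M mu a (bf : nat -> set T2w) n m : mu_monotone mu -> hypii M mu ->
  nle (mu a) (NFin M) ->
  exists U, clopen2w U /\ a `<=` U /\ forall j, (j <= m)%N -> Pk M mu (bf j) U n.
Proof.
move=> mono hii aM; elim: m => [|m [U1 [c1 [a1 P1]]]].
  have [U [c [aU P]]] := @multi_k M mu a (bf 0) n mono hii aM.
  exists U; split => //; split => // j j0; have -> : j = 0 by lia.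
  exact: P.
have [U2 [c2 [a2 P2]]] := @multi_k M mu a (bf m.+1) n mono hii aM.
exists (U1 `&` U2); split; first exact: clopenI.
split; first by move=> x ax; split; [exact: a1|exact: a2].
move=> j jm; have [->|jm'] : j = m.+1 \/ (j <= m)%N by lia.
  exact: Pk_mono mono (@subIsetr _ U1 U2) P2.
exact: Pk_mono mono (@subIsetl _ U1 U2) (P1 j jm').
Qed.

Lemma large_part M mu : mu_monotone mu -> hypii M mu -> large_fam (GG mu M) (HH mu).
Proof.
move=> mono hii g [[ginf gC] gM] Hs HsH [cHs _].
have [f fO] := countable_cover cHs.
have [n0 dn0] := infinite_setN0 ginf.
have c0M : nle (mu set0) (NFin M).
  eapply nle_trans; [apply: mono; exact: (sub0set (sect n0 (g n0)))|exact: gM n0 dn0].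
have aM : forall n, nle (mu (sect n (g n))) (NFin M).
  move=> n; case: (pselect (dom g n)) => [d|nd]; first exact: gM n d.
  eapply nle_trans; [apply: mono; exact: (@sect_set0 n _ nd)|exact: c0M].
have exU : forall n, exists U, clopen2w U /\ sect n (g n) `<=` U /\
    forall j, (j <= n)%N -> Pk M mu (sect n (f j n)) U n.
  move=> n; exact: (@multi_b M mu _ (fun j => sect n (f j n)) n n mono hii (aM n)).
have [Uf UfP] := choice exU.
pose o : fam := fun n => [set p | p.1 = n /\ Uf n p.2].
have sect_o : forall n, sect n (o n) = Uf n.
  by move=> n; apply/seteqP; split => x /=; [case|].
have gdom : forall n, dom g n -> dom o n /\ g n `<=` o n.
  move=> n [p gp].
  have sb : g n `<=` o n.
    move=> q gq; have [eq sq] := Cn_pair (gC n) gq.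
    split; first exact: (gC n q gq).
    exact: (UfP n).2.1 _ sq.
  by split; [exists p; exact: sb|exact: sb].
exists o; split; [split; [split|]|split].
- exact: (sub_infinite_set (fun n d => (gdom n d).1) ginf).
- by move=> n p [e _].
- move=> n _; split; first by move=> p [e _].
  by rewrite sect_o; exact: (UfP n).1.
- by split; [move=> n d; exact: (gdom n d).1|move=> n d; exact: (gdom n d).2].
- move=> h Hsh; have [j ej] := fO h Hsh; subst h.
  have [[hinf hC] hk] := HsH _ Hsh.
  have key : forall k N0, (forall n, dom (f j) n -> (N0 <= n)%N ->
        nle (NFin (k + M)) (mun mu n (f j n))) ->
      forall n, dom (f j) n -> (maxn (maxn j k) N0 <= n)%N ->
        nle (NFin k) (mun mu n (dotminus (f j) o n)).
    move=> k N0 hN n d le.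
    have jn : (j <= n)%N by lia.
    have kn : (k <= n)%N by lia.
    have N0n : (N0 <= n)%N by lia.
    have h1 := (UfP n).2.2 j jn k kn (hN n d N0n).
    eapply nle_trans; [exact h1|].
    apply: mono => x [hx nU]; split => // -[_ ux]; exact: nU ux.
  have dsub : forall n, dom (dotminus (f j) o) n -> dom (f j) n.
    by move=> n; apply: dom_sub => p [].
  split; [split|].
  + case E: (mu set0) c0M => [c|] //= cM.
    apply: unbounded_inf => N.
    have [N0 hN0] := hk (c.+1 + M).
    have [n [Nn dn]] := inf_unbounded hinf (maxn N (maxn (maxn j c.+1) N0)).
    exists n; split; first by lia.
    case: (pselect (dom (dotminus (f j) o) n)) => // nd; exfalso.
    have h1 := key c.+1 N0 hN0 n dn ltac:(lia).
    have h2 := mono _ _ (@sect_set0 n _ nd).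
    rewrite E in h2; have := nle_trans _ _ _ h1 h2; rewrite /=; lia.
  + by move=> n p [hp _]; exact: hC n p hp.
  + move=> k; have [N0 hN0] := hk (k + M); exists (maxn (maxn j k) N0) => n dn le.
    exact: key k N0 hN0 n (dsub n dn) le.
Qed.


Theorem theorem2p5 (M : nat) (mu : set T2w -> natinf) :
  mu_monotone mu -> mu_subadditive mu ->
  (forall U : set T2w, clopen2w U -> U !=set0 -> mu U = NInf) ->
  (forall a b : set T2w, nle (mu a) (NFin M) -> nlt (NFin M) (mu b) ->
     sup_ge [set s | exists U : set T2w, clopen2w U /\ a `<=` U /\
                       s = nadd (mu (b `\` U)) (NFin M)] (mu b)) ->
  dense_fam (HH mu) /\ shrinkable_fam (HH mu) /\ large_fam (GG mu M) (HH mu).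
Proof.
move=> mono sub hi hii; split; first exact: dense_part.
split; first exact: shrink_part.
exact: large_part.
Qed.
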